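(* Let $\phi:\mathcal M_1\to\mathcal M_2$ be a homomorphism of local Moufang sets, $\mathcal M_1=(X,(U_x))$, $\mathcal M_2=(Y,(V_y))$. (i) For each $x\in X$ there is a unique map $\theta_x:U_x\to V_{x\phi}$ with $(zu)\phi=(z\phi)\theta_x(u)$ for all $z\in X$, $u\in U_x$, and $\theta_x$ is a group homomorphism. (ii) If $x\in X$, $u\in U_x$, $v\in V_{x\phi}$ and there is $x'\in X\setminus\overline x$ with $(x'u)\phi=(x'\phi)v$, then $v=\theta_x(u)$. Suppose moreover that bases $(0,\infty)$ of $X$ and $(0',\infty')$ of $Y$ are chosen with $0\phi=0'$, $\infty\phi=\infty'$. Then (iii) for $x\not\sim\infty$, $\theta_\infty(\alpha_x)=\alpha_{x\phi}$ and $(-x)\phi=-(x\phi)$; (iv) if $x$ is a unit then $x\phi$ is a unit, $\mu_x\phi=\phi\mu_{x\phi}$, and if $\mu_x=g\alpha_xh$ with $g,h\in U_0$ then $\mu_{x\phi}=\theta_0(g)\alpha_{x\phi}\theta_0(h)$; (v) if $x$ is a unit then $\tilde x\phi=\widetilde{x\phi}$, where $\tilde y:=-((-y)\mu_y)$; (vi) $H_1\phi\subseteq\phi H_2$, where $H_1,H_2$ are the Hua subgroups of $\mathcal M_1,\mathcal M_2$.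
   Context: Group actions are right actions; maps are composed left to right, so $u\phi$ means first $u$ then $\phi$. For $(X,\sim)$, $\overline x$ is the class of $x$, $\overline X$ the set of classes, $\mathrm{Sym}(X,\sim)$ the bijections $g$ with $x\sim y\iff xg\sim yg$, $\overline U$ the induced group on $\overline X$. A local Moufang set is $(X,\sim)$ with $|\overline X|>2$ and subgroups $U_x\le\mathrm{Sym}(X,\sim)$ ($x\in X$) with: (LM0) $x\sim y\Rightarrow\overline{U_x}=\overline{U_y}$; (LM1) $U_x$ fixes $x$ and is sharply transitive on $X\setminus\overline x$; (LM1') $\overline{U_x}$ fixes $\overline x$ and is sharply transitive on $\overline X\setminus\{\overline x\}$; (LM2) $U_x^g=U_{xg}$ for all $x$ and all $g\in G:=\langle U_y\rangle$, where $g^h=h^{-1}gh$. A homomorphism $\mathcal M_1=(X,(U_x))\to\mathcal M_2=(Y,(V_y))$ is a map $\phi:X\to Y$ such that $x\sim x'\iff x\phi\sim x'\phi$ for all $x,x'\in X$, and $U_x\phi\subseteq\phi V_{x\phi}$ for all $x$ (i.e. for every $u\in U_x$ there is $v\in V_{x\phi}$ with $u\phi=\phi v$). Given a basis $(0,\infty)$ (two inequivalent points): $\alpha_x$ ($x\not\sim\infty$) is the unique element of $U_\infty$ with $0\alpha_x=x$; $-x:=0\alpha_x^{-1}$; a unit is $x$ with $x\not\sim0,\infty$; $\mu_x$ is the unique element of $U_0\alpha_xU_0$ swapping $0,\infty$; the Hua subgroup is $H=\langle\mu_x\mu_y\mid x,y\text{ units}\rangle$. *)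

(* Defs.v *)
From Stdlib Require Import Classical ClassicalEpsilon FunctionalExtensionality.

Set Implicit Arguments.

(* Right actions, maps composed left to right:  z (f g) = g (f z). *)
Definition comp {X : Type} (f g : X -> X) : X -> X := fun z => g (f z).

Definition inv_pair {X : Type} (f g : X -> X) : Prop :=
  (forall z, g (f z) = z) /\ (forall z, f (g z) = z).

Definition sym_perm {X : Type} (sim : X -> X -> Prop) (f : X -> X) : Prop :=
  (exists g, inv_pair f g) /\ (forall x y, sim x y <-> sim (f x) (f y)).

Definition is_subgroup {X : Type} (sim : X -> X -> Prop) (P : (X -> X) -> Prop) : Prop :=
  (forall f, P f -> sym_perm sim f) /\
  P (fun z => z) /\
  (forall f g, P f -> P g -> P (comp f g)) /\
  (forall f, P f -> exists g, P g /\ inv_pair f g).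

Inductive gen_group {X : Type} (S : (X -> X) -> Prop) : (X -> X) -> Prop :=
  | gg_id : gen_group S (fun z => z)
  | gg_mul : forall g s, gen_group S g -> S s -> gen_group S (comp g s)
  | gg_inv : forall g s w, gen_group S g -> S s -> inv_pair s w ->
               gen_group S (comp g w).

(* (X,~) with root groups (U_x), U x u  meaning  u \in U_x *)
Definition local_moufang_set {X : Type} (sim : X -> X -> Prop)
    (U : X -> (X -> X) -> Prop) : Prop :=
  (forall x, sim x x) /\ (forall x y, sim x y -> sim y x) /\
  (forall x y z, sim x y -> sim y z -> sim x z) /\
  (exists a b c, ~ sim a b /\ ~ sim a c /\ ~ sim b c) /\
  (forall x, is_subgroup sim (U x)) /\
  (* LM0: x ~ y  =>  induced groups on X/~ coincide *)
  (forall x y, sim x y -> forall u, U x u ->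
       exists u', U y u' /\ forall z, sim (u z) (u' z)) /\
  (forall x u, U x u -> u x = x) /\
  (forall x y z, ~ sim y x -> ~ sim z x -> exists! u, U x u /\ u y = z) /\
  (* LM1': induced group fixes the class of x and is sharply transitive
     on the other classes *)
  (forall x u, U x u -> sim (u x) x) /\
  (forall x y z, ~ sim y x -> ~ sim z x -> exists u, U x u /\ sim (u y) z) /\
  (forall x u u' y, U x u -> U x u' -> ~ sim y x -> sim (u y) (u' y) ->
       forall w, sim (u w) (u' w)) /\
  (* LM2: U_x^g = U_{xg} for g in G = <U_y> ; w = g^-1 u g  iff
     u = g w g^-1 *)
  (forall x g ginv, gen_group (fun s => exists y, U y s) g -> inv_pair g ginv ->
       forall w, U (g x) w <-> U x (fun z => ginv (w (g z)))).

Definition lms_hom {X Y : Type} (simX : X -> X -> Prop) (U : X -> (X -> X) -> Prop)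
    (simY : Y -> Y -> Prop) (V : Y -> (Y -> Y) -> Prop) (phi : X -> Y) : Prop :=
  (forall x x', simX x x' <-> simY (phi x) (phi x')) /\
  (forall x u, U x u -> exists v, V (phi x) v /\ forall z, phi (u z) = v (phi z)).

(* theta : U_x -> V_{x phi} with (z u) phi = (z phi) theta(u)
   (theta is a total function on X -> X; only its values on U_x matter) *)
Definition theta_spec {X Y : Type} (U : X -> (X -> X) -> Prop)
    (V : Y -> (Y -> Y) -> Prop) (phi : X -> Y) (x : X)
    (theta : (X -> X) -> (Y -> Y)) : Prop :=
  forall u, U x u -> V (phi x) (theta u) /\ forall z, phi (u z) = theta u (phi z).

Definition alpha {X : Type} (U : X -> (X -> X) -> Prop) (zero inf x : X) : X -> X :=
  epsilon (inhabits (fun z : X => z)) (fun a => U inf a /\ a zero = x).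

Definition lms_neg {X : Type} (U : X -> (X -> X) -> Prop) (zero inf x : X) : X :=
  epsilon (inhabits zero) (fun y => alpha U zero inf x y = zero).

Definition is_unit {X : Type} (sim : X -> X -> Prop) (zero inf x : X) : Prop :=
  ~ sim x zero /\ ~ sim x inf.

Definition mu {X : Type} (U : X -> (X -> X) -> Prop) (zero inf x : X) : X -> X :=
  epsilon (inhabits (fun z : X => z))
    (fun m => (exists g h, U zero g /\ U zero h /\
                 m = comp (comp g (alpha U zero inf x)) h) /\
              m zero = inf /\ m inf = zero).

Definition tilde {X : Type} (U : X -> (X -> X) -> Prop) (zero inf x : X) : X :=
  lms_neg U zero inf (mu U zero inf x (lms_neg U zero inf x)).

Definition hua {X : Type} (sim : X -> X -> Prop) (U : X -> (X -> X) -> Prop)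
    (zero inf : X) : (X -> X) -> Prop :=
  gen_group (fun s => exists x y, is_unit sim zero inf x /\ is_unit sim zero inf y /\
                        s = comp (mu U zero inf x) (mu U zero inf y)).

(* Main.v *)
Require Import Defs.
From Stdlib Require Import Classical ClassicalEpsilon FunctionalExtensionality.

Lemma L_sym {T} {sim : T -> T -> Prop} {U} (H : local_moufang_set sim U) :
  forall x y, sim x y -> sim y x.
Proof. destruct H as (_&H&_). exact H. Qed.
Lemma L_trans {T} {sim : T -> T -> Prop} {U} (H : local_moufang_set sim U) :
  forall x y z, sim x y -> sim y z -> sim x z.
Proof. destruct H as (_&_&H&_). exact H. Qed.
Lemma L_three {T} {sim : T -> T -> Prop} {U} (H : local_moufang_set sim U) :
  exists a b c, ~ sim a b /\ ~ sim a c /\ ~ sim b c.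
Proof. destruct H as (_&_&_&H&_). exact H. Qed.
Lemma L_sub {T} {sim : T -> T -> Prop} {U} (H : local_moufang_set sim U) :
  forall x, is_subgroup sim (U x).
Proof. destruct H as (_&_&_&_&H&_). exact H. Qed.
Lemma L_fix {T} {sim : T -> T -> Prop} {U} (H : local_moufang_set sim U) :
  forall x u, U x u -> u x = x.
Proof. destruct H as (_&_&_&_&_&_&H&_). exact H. Qed.
Arguments L_fix {T sim U} H {x u} _.
Lemma L_sharp {T} {sim : T -> T -> Prop} {U} (H : local_moufang_set sim U) :
  forall x y z, ~ sim y x -> ~ sim z x -> exists! u, U x u /\ u y = z.
Proof. destruct H as (_&_&_&_&_&_&_&H&_). exact H. Qed.

Lemma U_perm {T} {sim : T -> T -> Prop} {U} (H : local_moufang_set sim U) {x u} :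
  U x u -> sym_perm sim u.
Proof. intro Hu. destruct (L_sub H x) as [Hp _]. auto. Qed.

Lemma U_inv {T} {sim : T -> T -> Prop} {U} (H : local_moufang_set sim U) {x u} :
  U x u -> exists g, inv_pair u g.
Proof. intro Hu. destruct (U_perm H Hu) as [Hg _]. exact Hg. Qed.

Lemma U_inj {T} {sim : T -> T -> Prop} {U} (H : local_moufang_set sim U) {x u} a b :
  U x u -> u a = u b -> a = b.
Proof.
  intros Hu E. destruct (U_inv H Hu) as [g [Hg _]].
  rewrite <- (Hg a), <- (Hg b), E. reflexivity.
Qed.

Lemma U_sim {T} {sim : T -> T -> Prop} {U} (H : local_moufang_set sim U) {x u} a b :
  U x u -> (sim a b <-> sim (u a) (u b)).
Proof. intro Hu. destruct (U_perm H Hu) as [_ Hs]. apply Hs. Qed.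

Lemma U_comp {T} {sim : T -> T -> Prop} {U} (H : local_moufang_set sim U) {x u u'} :
  U x u -> U x u' -> U x (comp u u').
Proof. intros. destruct (L_sub H x) as (_&_&Hc&_). auto. Qed.

Lemma U_ex {T} {sim : T -> T -> Prop} {U} (H : local_moufang_set sim U) {x a b} :
  ~ sim a x -> ~ sim b x -> exists u, U x u /\ u a = b.
Proof.
  intros Ha Hb. destruct (L_sharp H x a b Ha Hb) as [u [[Hu E] _]]. eauto.
Qed.

Lemma U_uniq {T} {sim : T -> T -> Prop} {U} (H : local_moufang_set sim U) {y v v'} z :
  U y v -> U y v' -> ~ sim z y -> v z = v' z -> v = v'.
Proof.
  intros Hv Hv' Hz E.
  assert (Hn : ~ sim (v z) y).
  { intro C. apply Hz. apply (proj2 (U_sim H z y Hv)). rewrite (L_fix H Hv). exact C. }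
  destruct (L_sharp H y z (v z) Hz Hn) as [w [_ Hu]].
  transitivity w.
  - symmetry. apply Hu. auto.
  - apply Hu. auto.
Qed.

Lemma exists_nsim {T} {sim : T -> T -> Prop} {U} (H : local_moufang_set sim U) x :
  exists z, ~ sim z x.
Proof.
  destruct (L_three H) as (a&b&c&Hab&_).
  destruct (classic (sim a x)) as [Ha|Ha]; [|eauto].
  exists b. intro Hb. apply Hab. eapply L_trans; [exact H|exact Ha|]. apply (L_sym H). exact Hb.
Qed.

Lemma inv_comp {T} (f f' g g' : T -> T) :
  inv_pair f f' -> inv_pair g g' -> inv_pair (comp f g) (comp g' f').
Proof.
  intros [A B] [C D]. unfold comp; split; intro z.
  - rewrite C. apply A.
  - rewrite B. apply D.
Qed.

Lemma alpha_spec {T} {sim : T -> T -> Prop} {U} (H : local_moufang_set sim U) {zero inf x} :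
  ~ sim zero inf -> ~ sim x inf ->
  U inf (alpha U zero inf x) /\ alpha U zero inf x zero = x.
Proof.
  intros H1 H2. unfold alpha.
  apply (epsilon_spec (inhabits (fun z : T => z)) (fun a => U inf a /\ a zero = x)).
  apply (U_ex H); auto.
Qed.

Lemma neg_spec {T} {sim : T -> T -> Prop} {U} (H : local_moufang_set sim U) {zero inf x} :
  ~ sim zero inf -> ~ sim x inf ->
  alpha U zero inf x (lms_neg U zero inf x) = zero.
Proof.
  intros H1 H2. destruct (alpha_spec H H1 H2) as [Ha _].
  destruct (U_inv H Ha) as [g [_ Hg]].
  unfold lms_neg.
  apply (epsilon_spec (inhabits zero) (fun y => alpha U zero inf x y = zero)).
  exists (g zero). apply Hg.
Qed.

Lemma neg_not0 {T} {sim : T -> T -> Prop} {U} (H : local_moufang_set sim U) {zero inf x} :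
  ~ sim zero inf -> ~ sim x inf -> ~ sim x zero ->
  ~ sim (lms_neg U zero inf x) zero.
Proof.
  intros H1 H2 H3 C. destruct (alpha_spec H H1 H2) as [Ha Hz].
  apply H3. apply (L_sym H).
  pose proof (proj1 (U_sim H _ _ Ha) C) as C'.
  rewrite (neg_spec H H1 H2) in C'. rewrite Hz in C'. exact C'.
Qed.

Definition mu_prop {T} (U : T -> (T -> T) -> Prop) (zero inf x : T) (m : T -> T) :=
  (exists g h, U zero g /\ U zero h /\
                 m = comp (comp g (alpha U zero inf x)) h) /\
              m zero = inf /\ m inf = zero.

Lemma mu_exists {T} {sim : T -> T -> Prop} {U} (H : local_moufang_set sim U) {zero inf x} :
  ~ sim zero inf -> is_unit sim zero inf x -> exists m, mu_prop U zero inf x m.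
Proof.
  intros H1 [H2 H3].
  assert (H1' : ~ sim inf zero) by (intro C; apply H1; apply (L_sym H); exact C).
  destruct (alpha_spec H H1 H3) as [Ha Haz].
  destruct (U_ex H H2 H1') as [h [Hh Hhx]].
  destruct (U_ex H H1' (neg_not0 H H1 H3 H2)) as [g [Hg Hgi]].
  exists (comp (comp g (alpha U zero inf x)) h).
  split; [eauto 6|]. unfold comp. split.
  - rewrite (L_fix H Hg), Haz. exact Hhx.
  - rewrite Hgi, (neg_spec H H1 H3). apply (L_fix H Hh).
Qed.

Lemma mu_spec {T} {sim : T -> T -> Prop} {U} (H : local_moufang_set sim U) {zero inf x} :
  ~ sim zero inf -> is_unit sim zero inf x -> mu_prop U zero inf x (mu U zero inf x).
Proof.
  intros H1 H2. unfold mu.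
  apply (epsilon_spec (inhabits (fun z : T => z)) (mu_prop U zero inf x)).
  apply (mu_exists H); auto.
Qed.

Lemma mu_unique {T} {sim : T -> T -> Prop} {U} (H : local_moufang_set sim U) {zero inf x m1 m2} :
  ~ sim zero inf -> is_unit sim zero inf x ->
  mu_prop U zero inf x m1 -> mu_prop U zero inf x m2 -> m1 = m2.
Proof.
  intros H1 [H2 H3] [(g1&h1&Hg1&Hh1&E1) [A1 B1]] [(g2&h2&Hg2&Hh2&E2) [A2 B2]].
  assert (H1' : ~ sim inf zero) by (intro C; apply H1; apply (L_sym H); exact C).
  destruct (alpha_spec H H1 H3) as [Ha Haz].
  subst m1 m2. unfold comp in *.
  rewrite (L_fix H Hg1), Haz in A1. rewrite (L_fix H Hg2), Haz in A2.
  assert (Eh : h1 = h2) by (apply (U_uniq H x Hh1 Hh2 H2); congruence).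
  subst h2.
  assert (Eg : g1 = g2).
  { apply (U_uniq H inf Hg1 Hg2 H1'). apply (U_inj H _ _ Ha). apply (U_inj H _ _ Hh1). congruence. }
  subst. reflexivity.
Qed.

Lemma hom_nsim {X Y} {simX : X -> X -> Prop} {U} {simY : Y -> Y -> Prop} {V} {phi}
  (Hphi : lms_hom simX U simY V phi) {a b} : ~ simX a b -> ~ simY (phi a) (phi b).
Proof. intros N C. apply N. apply (proj1 Hphi). exact C. Qed.

Lemma theta_ex {X Y} {simX : X -> X -> Prop} {U} {simY : Y -> Y -> Prop} {V} {phi}
  (Hphi : lms_hom simX U simY V phi) x : exists theta, theta_spec U V phi x theta.
Proof.
  exists (fun u => epsilon (inhabits (fun z : Y => z))
     (fun v => V (phi x) v /\ forall z, phi (u z) = v (phi z))).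
  intros u Hu.
  apply (epsilon_spec (inhabits (fun z : Y => z))
     (fun v => V (phi x) v /\ forall z, phi (u z) = v (phi z))).
  apply (proj2 Hphi). exact Hu.
Qed.

Lemma phi_alpha {X Y} {simX : X -> X -> Prop} {U} {simY : Y -> Y -> Prop} {V} {phi}
  (HX : local_moufang_set simX U) (HY : local_moufang_set simY V)
  (Hphi : lms_hom simX U simY V phi) {zero inf x} :
  ~ simX zero inf -> ~ simX x inf -> forall w,
  phi (alpha U zero inf x w) = alpha V (phi zero) (phi inf) (phi x) (phi w).
Proof.
  intros H1 H2.
  destruct (alpha_spec HX H1 H2) as [Ha Haz].
  destruct (proj2 Hphi _ _ Ha) as [v [Hv Ev]].
  destruct (alpha_spec HY (hom_nsim Hphi H1) (hom_nsim Hphi H2)) as [Ha' Haz'].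
  assert (v = alpha V (phi zero) (phi inf) (phi x)).
  { apply (U_uniq HY (phi zero) Hv Ha' (hom_nsim Hphi H1)).
    rewrite Haz', <- Ev, Haz. reflexivity. }
  subst v. exact Ev.
Qed.

Lemma phi_neg {X Y} {simX : X -> X -> Prop} {U} {simY : Y -> Y -> Prop} {V} {phi}
  (HX : local_moufang_set simX U) (HY : local_moufang_set simY V)
  (Hphi : lms_hom simX U simY V phi) {zero inf x} :
  ~ simX zero inf -> ~ simX x inf ->
  phi (lms_neg U zero inf x) = lms_neg V (phi zero) (phi inf) (phi x).
Proof.
  intros H1 H2.
  destruct (alpha_spec HY (hom_nsim Hphi H1) (hom_nsim Hphi H2)) as [Ha' Haz'].
  apply (U_inj HY _ _ Ha').
  rewrite <- (phi_alpha HX HY Hphi H1 H2), (neg_spec HX H1 H2).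
  rewrite (neg_spec HY (hom_nsim Hphi H1) (hom_nsim Hphi H2)). reflexivity.
Qed.

Lemma key_comp {X Y} {simX : X -> X -> Prop} {U} {simY : Y -> Y -> Prop} {V} {phi}
  (HX : local_moufang_set simX U) (HY : local_moufang_set simY V)
  (Hphi : lms_hom simX U simY V phi) {zero inf x} g h theta :
  ~ simX zero inf -> ~ simX x inf -> theta_spec U V phi zero theta ->
  U zero g -> U zero h -> forall z,
  phi (comp (comp g (alpha U zero inf x)) h z) =
  comp (comp (theta g) (alpha V (phi zero) (phi inf) (phi x))) (theta h) (phi z).
Proof.
  intros H1 H2 Ht Hg Hh z. unfold comp.
  rewrite (proj2 (Ht h Hh)), (phi_alpha HX HY Hphi H1 H2), (proj2 (Ht g Hg)).
  reflexivity.
Qed.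

Lemma unit_phi {X Y} {simX : X -> X -> Prop} {U} {simY : Y -> Y -> Prop} {V} {phi}
  (Hphi : lms_hom simX U simY V phi) {zero inf x} :
  is_unit simX zero inf x -> is_unit simY (phi zero) (phi inf) (phi x).
Proof. intros [A B]. split; apply (hom_nsim Hphi); assumption. Qed.

Lemma mu_map {X Y} {simX : X -> X -> Prop} {U} {simY : Y -> Y -> Prop} {V} {phi}
  (HX : local_moufang_set simX U) (HY : local_moufang_set simY V)
  (Hphi : lms_hom simX U simY V phi) {zero inf x} g h theta :
  ~ simX zero inf -> is_unit simX zero inf x -> theta_spec U V phi zero theta ->
  U zero g -> U zero h ->
  mu U zero inf x = comp (comp g (alpha U zero inf x)) h ->
  mu V (phi zero) (phi inf) (phi x) =
    comp (comp (theta g) (alpha V (phi zero) (phi inf) (phi x))) (theta h).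
Proof.
  intros H1 Hu Ht Hg Hh E.
  pose proof (key_comp HX HY Hphi g h theta H1 (proj2 Hu) Ht Hg Hh) as K.
  destruct (mu_spec HX H1 Hu) as [_ [Mz Mi]]. rewrite E in Mz, Mi.
  apply (mu_unique HY (hom_nsim Hphi H1) (unit_phi Hphi Hu)).
  - apply (mu_spec HY (hom_nsim Hphi H1) (unit_phi Hphi Hu)).
  - split; [|split].
    + exists (theta g), (theta h). split; [apply (Ht g Hg)|]. split; [apply (Ht h Hh)|].
      reflexivity.
    + rewrite <- K, Mz. reflexivity.
    + rewrite <- K, Mi. reflexivity.
Qed.

Lemma mu_phi {X Y} {simX : X -> X -> Prop} {U} {simY : Y -> Y -> Prop} {V} {phi}
  (HX : local_moufang_set simX U) (HY : local_moufang_set simY V)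
  (Hphi : lms_hom simX U simY V phi) {zero inf x} :
  ~ simX zero inf -> is_unit simX zero inf x -> forall z,
  phi (mu U zero inf x z) = mu V (phi zero) (phi inf) (phi x) (phi z).
Proof.
  intros H1 Hu z.
  destruct (mu_spec HX H1 Hu) as [(g&h&Hg&Hh&E) _].
  destruct (theta_ex Hphi zero) as [theta Ht].
  rewrite (mu_map HX HY Hphi g h theta H1 Hu Ht Hg Hh E), E.
  apply (key_comp HX HY Hphi g h theta H1 (proj2 Hu) Ht Hg Hh).
Qed.

Lemma mu_inv {T} {sim : T -> T -> Prop} {U} (H : local_moufang_set sim U) {zero inf x} :
  ~ sim zero inf -> is_unit sim zero inf x -> exists w, inv_pair (mu U zero inf x) w.
Proof.
  intros H1 Hu.
  destruct (mu_spec H H1 Hu) as [(g&h&Hg&Hh&E) _]. rewrite E.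
  destruct (alpha_spec H H1 (proj2 Hu)) as [Ha _].
  destruct (U_inv H Hg) as [g' G]. destruct (U_inv H Hh) as [h' Hh'].
  destruct (U_inv H Ha) as [a' A].
  eexists. apply inv_comp; [apply inv_comp|]; eassumption.
Qed.

Theorem mainTheorem8 (X Y : Type) (simX : X -> X -> Prop) (U : X -> (X -> X) -> Prop)
    (simY : Y -> Y -> Prop) (V : Y -> (Y -> Y) -> Prop) (phi : X -> Y)
    (HX : local_moufang_set simX U) (HY : local_moufang_set simY V)
    (Hphi : lms_hom simX U simY V phi) :
  (* (i) *)
  (forall x, exists theta, theta_spec U V phi x theta /\
     (forall theta', theta_spec U V phi x theta' -> forall u, U x u -> theta' u = theta u) /\
     (forall u u', U x u -> U x u' -> theta (comp u u') = comp (theta u) (theta u'))) /\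
  (* (ii) *)
  (forall x u v x', U x u -> V (phi x) v -> ~ simX x' x ->
     phi (u x') = v (phi x') ->
     forall theta, theta_spec U V phi x theta -> v = theta u) /\
  (* (iii)-(vi), for bases (0,inf) of X and (0',inf') of Y with 0 phi = 0', inf phi = inf' *)
  (forall zero inf zero' inf',
     ~ simX zero inf -> ~ simY zero' inf' -> phi zero = zero' -> phi inf = inf' ->
     (* (iii) *)
     (forall x, ~ simX x inf ->
        (forall theta, theta_spec U V phi inf theta ->
           theta (alpha U zero inf x) = alpha V zero' inf' (phi x)) /\
        phi (lms_neg U zero inf x) = lms_neg V zero' inf' (phi x)) /\
     (* (iv) *)
     (forall x, is_unit simX zero inf x ->
        is_unit simY zero' inf' (phi x) /\
        (forall z, phi (mu U zero inf x z) = mu V zero' inf' (phi x) (phi z)) /\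
        (forall g h theta, theta_spec U V phi zero theta -> U zero g -> U zero h ->
           mu U zero inf x = comp (comp g (alpha U zero inf x)) h ->
           mu V zero' inf' (phi x) =
             comp (comp (theta g) (alpha V zero' inf' (phi x))) (theta h))) /\
     (* (v) *)
     (forall x, is_unit simX zero inf x ->
        phi (tilde U zero inf x) = tilde V zero' inf' (phi x)) /\
     (* (vi) *)
     (forall h, hua simX U zero inf h ->
        exists h', hua simY V zero' inf' h' /\ forall z, phi (h z) = h' (phi z))).
Proof.
  split; [|split].
  - intro x. destruct (theta_ex Hphi x) as [theta Ht].
    destruct (exists_nsim HX x) as [z Hz].
    assert (Uq : forall v v', V (phi x) v -> V (phi x) v' -> v (phi z) = v' (phi z) -> v = v').
    { intros v v' Hv Hv' E. exact (U_uniq HY (phi z) Hv Hv' (hom_nsim Hphi Hz) E). }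
    exists theta. split; [exact Ht|split].
    + intros theta' Ht' u Hu. apply Uq; [apply Ht'|apply Ht|]; auto.
      rewrite <- (proj2 (Ht' u Hu)), (proj2 (Ht u Hu)). reflexivity.
    + intros u u' Hu Hu'. pose proof (U_comp HX Hu Hu') as Huu.
      apply Uq; [apply Ht; auto| apply (U_comp HY); apply Ht; auto|].
      rewrite <- (proj2 (Ht _ Huu)). unfold comp.
      rewrite (proj2 (Ht u' Hu')), (proj2 (Ht u Hu)). reflexivity.
  - intros x u v x' Hu Hv Hx' E theta Ht.
    apply (U_uniq HY (phi x') Hv (proj1 (Ht u Hu)) (hom_nsim Hphi Hx')).
    rewrite <- E, (proj2 (Ht u Hu)). reflexivity.
  - intros zero inf zero' inf' H1 H1' E0 Ei. subst zero' inf'.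
    assert (Hiv : forall x, is_unit simX zero inf x -> forall z,
       phi (mu U zero inf x z) = mu V (phi zero) (phi inf) (phi x) (phi z)).
    { intros x Hu. apply (mu_phi HX HY Hphi H1 Hu). }
    split; [|split; [|split]].
    + intros x Hx. split.
      * intros theta Ht. destruct (alpha_spec HX H1 Hx) as [Ha Haz].
        destruct (alpha_spec HY (hom_nsim Hphi H1) (hom_nsim Hphi Hx)) as [Ha' Haz'].
        apply (U_uniq HY (phi zero) (proj1 (Ht _ Ha)) Ha' (hom_nsim Hphi H1)).
        rewrite <- (proj2 (Ht _ Ha)), Haz, Haz'. reflexivity.
      * apply (phi_neg HX HY Hphi H1 Hx).
    + intros x Hu. split; [apply (unit_phi Hphi Hu)|split].
      * apply Hiv; auto.
      * intros g h theta Ht Hg Hh E. apply (mu_map HX HY Hphi g h theta H1 Hu Ht Hg Hh E).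
    + intros x Hu. unfold tilde.
      destruct Hu as [Hx0 Hxi].
      pose proof (neg_not0 HX H1 Hxi Hx0) as Hn.
      destruct (mu_spec HX H1 (conj Hx0 Hxi)) as [(g&h&Hg&Hh&E) [Mz Mi]].
      assert (Hm : ~ simX (mu U zero inf x (lms_neg U zero inf x)) inf).
      { intro C. apply Hn. rewrite E in C, Mz. unfold comp in C, Mz.
        destruct (alpha_spec HX H1 Hxi) as [Ha _].
        apply (proj2 (U_sim HX _ _ Hg)).
        apply (proj2 (U_sim HX _ _ Ha)).
        apply (proj2 (U_sim HX _ _ Hh)). rewrite Mz. exact C. }
      rewrite (phi_neg HX HY Hphi H1 Hm), (Hiv x (conj Hx0 Hxi)),
        (phi_neg HX HY Hphi H1 Hxi). reflexivity.
    + intros h Hh. induction Hh as [|g s Hg IH Hs|g s w Hg IH Hs Hw].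
      * exists (fun z => z). split; [constructor|reflexivity].
      * destruct IH as [g' [Hg' Eg]].
        destruct Hs as (x&y&Hx&Hy&Es). subst s.
        exists (comp g' (comp (mu V (phi zero) (phi inf) (phi x)) (mu V (phi zero) (phi inf) (phi y)))).
        split.
        -- apply gg_mul; [exact Hg'|]. exists (phi x), (phi y).
           split; [apply (unit_phi Hphi Hx)|split; [apply (unit_phi Hphi Hy)|reflexivity]].
        -- intro z. unfold comp. rewrite (Hiv y Hy), (Hiv x Hx), Eg. reflexivity.
      * destruct IH as [g' [Hg' Eg]].
        destruct Hs as (x&y&Hx&Hy&Es). subst s.
        set (s' := comp (mu V (phi zero) (phi inf) (phi x)) (mu V (phi zero) (phi inf) (phi y))).
        destruct (mu_inv HY (hom_nsim Hphi H1) (unit_phi Hphi Hx)) as [ix Ix].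
        destruct (mu_inv HY (hom_nsim Hphi H1) (unit_phi Hphi Hy)) as [iy Iy].
        pose proof (inv_comp _ _ _ _ Ix Iy) as Is.
        assert (Es : forall t, phi (comp (mu U zero inf x) (mu U zero inf y) t) = s' (phi t)).
        { intro t. unfold s', comp. rewrite (Hiv y Hy), (Hiv x Hx). reflexivity. }
        exists (comp g' (comp iy ix)). split.
        -- eapply gg_inv; [exact Hg'| |exact Is].
           exists (phi x), (phi y).
           split; [apply (unit_phi Hphi Hx)|split; [apply (unit_phi Hphi Hy)|reflexivity]].
        -- intro z. destruct Hw as [_ Hw2]. destruct Is as [Is1 _].
           change (phi (w (g z)) = comp iy ix (g' (phi z))).
           rewrite <- Eg.
           rewrite <- (Is1 (phi (w (g z)))). f_equal.
           fold s'. rewrite <- Es. f_equal. apply Hw2.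
Qed.
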